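(* Let $k,d,n\in\mathbb N$, $Q,K,V\in\mathbb R^{k\times d}$, $A:=K^\top Q/\sqrt k$ and $R>0$. Masked self-attention $f^m$ with parameters $(A,V)$ is Lipschitz continuous on $B_R^n$ and $$\mathrm{Lip}\big(f^m_{|B_R^n}\big)\le\sqrt3\,\|V\|_2\big(\|A\|_2^2R^4(n+1)+n\big)^{1/2}.$$
   Context: Masked self-attention: for $X=(x_1,\dots,x_n)\in(\mathbb R^d)^n$, $f^m(X)_i=V\sum_{j=1}^iP_{ij}x_j$, $1\le i\le n$, with $P_{ij}=\exp(x_i^\top A^\top x_j)/\sum_{l=1}^i\exp(x_i^\top A^\top x_l)$ for $j\le i$. $B_R\subset\mathbb R^d$ is the closed ball of center 0, radius $R$. $\mathrm{Lip}(f^m_{|\mathcal X})=\sup_{X\ne Y\in\mathcal X}\|f^m(X)-f^m(Y)\|_F/\|X-Y\|_F$ with Frobenius norm $\|X\|_F=(\sum_i|x_i|^2)^{1/2}$; $\|\cdot\|_2$ is the spectral norm. *)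

(* Defs.v *)
From HB Require Import structures.
From mathcomp Require Import all_boot all_order all_algebra.
From mathcomp Require Import all_classical all_reals all_analysis.
Set Implicit Arguments. Unset Strict Implicit. Unset Printing Implicit Defensive.
Import Order.TTheory GRing.Theory Num.Theory.
Local Open Scope ring_scope.
Local Open Scope classical_set_scope.

Section Attention.
Variable R : realType.

Definition fnorm (m p : nat) (M : 'M[R]_(m, p)) : R :=
  Num.sqrt (\sum_(i < m) \sum_(j < p) M i j ^+ 2).

Definition spec_norm (m p : nat) (M : 'M[R]_(m, p)) : R :=
  sup [set fnorm (M *m x) | x in [set x : 'cV[R]_p | fnorm x <= 1]].

Definition attA (k d : nat) (Q K : 'M[R]_(k, d)) : 'M[R]_d :=
  (Num.sqrt (k%:R))^-1 *: (K^T *m Q).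

(* An input X = (x_1,...,x_n) in (R^d)^n is an n x d matrix whose i-th row is x_i.
   score A X i j = x_i^T A^T x_j. *)
Definition score (n d : nat) (A : 'M[R]_d) (X : 'M[R]_(n, d)) (i j : 'I_n) : R :=
  ((row i X) *m A^T *m (row j X)^T) 0 0.

Definition maskP (n d : nat) (A : 'M[R]_d) (X : 'M[R]_(n, d)) (i j : 'I_n) : R :=
  expR (score A X i j) / \sum_(l < n | (l <= i)%N) expR (score A X i l).

Definition masked_attn (k n d : nat) (A : 'M[R]_d) (V : 'M[R]_(k, d))
  (X : 'M[R]_(n, d)) : 'M[R]_(n, k) :=
  \matrix_(i < n) (\sum_(j < n | (j <= i)%N) maskP A X i j *: row j X) *m V^T.

Definition inBallN (n d : nat) (r : R) (X : 'M[R]_(n, d)) : Prop :=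
  forall i : 'I_n, fnorm (row i X) <= r.

Definition lip_quotients (n d m p : nat) (f : 'M[R]_(n, d) -> 'M[R]_(m, p)) (r : R)
  : set R :=
  [set t | exists X Y, [/\ inBallN r X, inBallN r Y, X <> Y &
           t = fnorm (f X - f Y) / fnorm (X - Y)]].

Definition lip_const (n d m p : nat) (f : 'M[R]_(n, d) -> 'M[R]_(m, p)) (r : R) : R :=
  sup (lip_quotients f r).

Definition lipschitz_on_ball (n d m p : nat) (f : 'M[R]_(n, d) -> 'M[R]_(m, p)) (r : R)
  : Prop :=
  exists C : R, forall X Y, inBallN r X -> inBallN r Y ->
    fnorm (f X - f Y) <= C * fnorm (X - Y).

End Attention.

(* Main.v *)
Require Import Defs.
From HB Require Import structures.
From mathcomp Require Import all_boot all_order all_algebra.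
From mathcomp Require Import all_classical all_reals all_analysis.
From mathcomp Require Import ring lra.
Set Implicit Arguments. Unset Strict Implicit. Unset Printing Implicit Defensive.
Import Order.TTheory GRing.Theory Num.Theory.
Local Open Scope ring_scope.
Section L1.
Variable R : realType.

Lemma cs_sq (I : finType) (f g : I -> R) :
  (\sum_i f i * g i) ^+ 2 <= (\sum_i f i ^+ 2) * (\sum_i g i ^+ 2).
Proof.
set A := \sum_i f i ^+ 2; set B := \sum_i f i * g i; set C := \sum_i g i ^+ 2.
have C0 : 0 <= C by apply: sumr_ge0 => i _; apply: sqr_ge0.
have E : \sum_i (C * f i - B * g i) ^+ 2 = C * (A * C - B ^+ 2).
  rewrite (eq_bigr (fun i => C ^+ 2 * f i ^+ 2 - (2 * C * B) * (f i * g i) + B ^+ 2 * g i ^+ 2)); last first.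
    by move=> i _; ring.
  rewrite !big_split /= sumrN -!mulr_sumr -/A -/B -/C; ring.
have H : 0 <= C * (A * C - B ^+ 2) by rewrite -E; apply: sumr_ge0 => i _; apply: sqr_ge0.
have [Cz|Cp] := eqVneq C 0.
  have g0 : forall i, g i = 0.
    move=> i; apply/eqP; rewrite -sqrf_eq0; apply/eqP.
    by move/eqP: Cz; rewrite psumr_eq0 => [/allP/(_ i (mem_index_enum _)) /implyP/(_ isT)/eqP|j _]; [|apply: sqr_ge0].
  have -> : B = 0 by rewrite /B big1 // => i _; rewrite g0 mulr0.
  by rewrite expr2 mulr0 Cz mulr0.
have Cpos : 0 < C by rewrite lt0r Cp C0.
rewrite pmulr_rge0 // subr_ge0 in H.
exact: H.
Qed.

End L1.

Section L2.
Variable R : realType.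

Lemma sqr_le (a b : R) : 0 <= b -> a ^+ 2 <= b ^+ 2 -> a <= b.
Proof. move=> b0 h; nra. Qed.

Definition ssm (m p : nat) (M : 'M[R]_(m, p)) : R := \sum_i \sum_j M i j ^+ 2.
Definition mdot (m p : nat) (M N : 'M[R]_(m, p)) : R := \sum_i \sum_j M i j * N i j.

Lemma fnormE (m p : nat) (M : 'M[R]_(m, p)) : fnorm M = Num.sqrt (ssm M).
Proof. by []. Qed.

Variables m p : nat.
Implicit Types M N : 'M[R]_(m, p).


Lemma ssm_ge0 M : 0 <= ssm M.
Proof. by apply: sumr_ge0 => i _; apply: sumr_ge0 => j _; apply: sqr_ge0. Qed.

Lemma fnorm_ge0 M : 0 <= fnorm M.
Proof. exact: sqrtr_ge0. Qed.

Lemma fnorm_sq M : fnorm M ^+ 2 = ssm M.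
Proof. by rewrite /fnorm sqr_sqrtr // ssm_ge0. Qed.

Lemma mdot_sq M N : mdot M N ^+ 2 <= ssm M * ssm N.
Proof.
rewrite /mdot /ssm !pair_bigA /=.
exact: (cs_sq (fun q : 'I_m * 'I_p => M q.1 q.2) (fun q => N q.1 q.2)).
Qed.

Lemma mdot_le M N : mdot M N <= fnorm M * fnorm N.
Proof.
apply: sqr_le; first by rewrite mulr_ge0 // fnorm_ge0.
by rewrite exprMn !fnorm_sq mdot_sq.
Qed.

Lemma mdot_abs M N : `|mdot M N| <= fnorm M * fnorm N.
Proof.
apply: sqr_le; first by rewrite mulr_ge0 // fnorm_ge0.
by rewrite exprMn !fnorm_sq real_normK ?num_real // mdot_sq.
Qed.

Lemma ssmD M N : ssm (M + N) = ssm M + 2 * mdot M N + ssm N.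
Proof.
rewrite /ssm /mdot mulr_sumr -!big_split /=; apply: eq_bigr => i _.
rewrite mulr_sumr -!big_split /=; apply: eq_bigr => j _; rewrite mxE; ring.
Qed.

Lemma fnormD M N : fnorm (M + N) <= fnorm M + fnorm N.
Proof.
apply: sqr_le; first by rewrite addr_ge0 // fnorm_ge0.
rewrite fnorm_sq ssmD -!fnorm_sq; have := mdot_le M N; nra.
Qed.

Lemma ssmZ c M : ssm (c *: M) = c ^+ 2 * ssm M.
Proof.
rewrite /ssm mulr_sumr; apply: eq_bigr => i _; rewrite mulr_sumr; apply: eq_bigr => j _.
by rewrite mxE exprMn.
Qed.

Lemma fnormZ c M : fnorm (c *: M) = `|c| * fnorm M.
Proof. by rewrite !fnormE ssmZ sqrtrM ?sqr_ge0 // sqrtr_sqr. Qed.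

Lemma fnormN M : fnorm (- M) = fnorm M.
Proof. by rewrite -scaleN1r fnormZ normrN normr1 mul1r. Qed.

Lemma fnormB M N : fnorm (M - N) = fnorm (N - M).
Proof. by rewrite -fnormN opprB. Qed.

Lemma fnorm0 : fnorm (0 : 'M[R]_(m, p)) = 0.
Proof. by rewrite -(scale0r (0 : 'M[R]_(m,p))) fnormZ normr0 mul0r. Qed.

Lemma fnorm_sum (I : Type) (r : seq I) (P : pred I) (F : I -> 'M[R]_(m, p)) :
  fnorm (\sum_(i <- r | P i) F i) <= \sum_(i <- r | P i) fnorm (F i).
Proof.
elim/big_rec2: _ => [|i y M _ IH]; first by rewrite fnorm0.
by apply: le_trans (fnormD _ _) _; rewrite lerD2l.
Qed.

Lemma fnorm_eq0 M : fnorm M = 0 -> M = 0.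
Proof.
move=> h; have : ssm M = 0 by rewrite -fnorm_sq h expr2 mul0r.
move=> /eqP; rewrite psumr_eq0; last by move=> i _; apply: sumr_ge0 => j _; apply: sqr_ge0.
move=> /allP H; apply/matrixP => i j; rewrite mxE.
have := H i (mem_index_enum _); rewrite implyTb psumr_eq0; last by move=> *; apply: sqr_ge0.
by move=> /allP/(_ j (mem_index_enum _)); rewrite implyTb sqrf_eq0 => /eqP.
Qed.

End L2.
Section L2b.
Variable R : realType.
Variables m p : nat.
Implicit Types M N : 'M[R]_(m, p).

Lemma ssm_tr M : ssm M^T = ssm M.
Proof. by rewrite /ssm exchange_big; apply: eq_bigr => i _; apply: eq_bigr => j _; rewrite mxE. Qed.

Lemma fnorm_tr M : fnorm M^T = fnorm M.
Proof. by rewrite !fnormE ssm_tr. Qed.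

Lemma ssm_row i M : ssm (row i M) = \sum_j M i j ^+ 2.
Proof. by rewrite /ssm big_ord1; apply: eq_bigr => j _; rewrite mxE. Qed.

Lemma ssm_rows M : ssm M = \sum_i fnorm (row i M) ^+ 2.
Proof. by apply: eq_bigr => i _; rewrite fnorm_sq ssm_row. Qed.

Lemma fnorm_row_le i M : fnorm (row i M) <= fnorm M.
Proof.
rewrite !fnormE ler_sqrt ?ssm_ge0 // ssm_row /ssm (bigD1 i) //= lerDl.
by apply: sumr_ge0 => l _; apply: sumr_ge0 => j _; apply: sqr_ge0.
Qed.

End L2b.

Lemma fnorm_mul_le (R : realType) (m p q : nat) (M : 'M[R]_(m, p)) (N : 'M[R]_(p, q)) :
  fnorm (M *m N) <= fnorm M * fnorm N.
Proof.
apply: sqr_le; first by rewrite mulr_ge0 // fnorm_ge0.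
rewrite exprMn !fnorm_sq.
have -> : ssm N = \sum_j \sum_l N l j ^+ 2 by rewrite /ssm exchange_big.
rewrite /ssm mulr_suml; apply: ler_sum => i _.
rewrite mulr_sumr; apply: ler_sum => j _; rewrite mxE.
exact: (cs_sq (fun l => M i l) (fun l => N l j)).
Qed.

Local Open Scope classical_set_scope.
Section L3.
Variable R : realType.
Variables m p : nat.
Implicit Types M : 'M[R]_(m, p).

Lemma spec_has_ub M :
  has_ubound [set fnorm (M *m x) | x in [set x : 'cV[R]_p | fnorm x <= 1]].
Proof.
exists (fnorm M) => y [x /= hx <-].
apply: le_trans (fnorm_mul_le _ _) _.
by rewrite ler_piMr ?fnorm_ge0.
Qed.

Lemma spec_ge0 M : 0 <= spec_norm M.
Proof.
apply: (ub_le_sup (spec_has_ub M)); exists 0 => /=; first by rewrite fnorm0 ler01.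
by rewrite mulmx0 fnorm0.
Qed.

Lemma spec_le M (x : 'cV[R]_p) : fnorm (M *m x) <= spec_norm M * fnorm x.
Proof.
have [x0|xn0] := eqVneq (fnorm x) 0.
  by rewrite (fnorm_eq0 x0) mulmx0 !fnorm0 mulr0.
have xp : 0 < fnorm x by rewrite lt0r xn0 fnorm_ge0.
have H : fnorm (M *m ((fnorm x)^-1 *: x)) <= spec_norm M.
  apply: (ub_le_sup (spec_has_ub M)); exists ((fnorm x)^-1 *: x) => //=.
  by rewrite fnormZ ger0_norm ?invr_ge0 ?fnorm_ge0 // mulVf.
rewrite -scalemxAr fnormZ ger0_norm ?invr_ge0 ?fnorm_ge0 // in H.
by rewrite -ler_pdivrMr // mulrC.
Qed.

End L3.

Section L4.
Variable R : realType.

Lemma exp2_bound (de : R) : 0 <= de -> 2 * de < 1 ->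
  (expR de - expR (- de)) * expR de <= 2 * de / (1 - 2 * de).
Proof.
move=> d0 d1.
have h1 := expR_ge1Dx (- (2 * de)).
have e2 : expR (- (2 * de)) = (expR de ^+ 2)^-1.
  by rewrite expRN expRM_natl.
have eX : expR de * expR (- de) = 1 by rewrite expRxMexpNx_1.
have Xp := expR_gt0 de.
rewrite e2 in h1.
have H : expR de ^+ 2 * (1 - 2 * de) <= 1.
  by rewrite mulrC -ler_pdivlMr ?exprn_gt0 // mul1r.
rewrite ler_pdivlMr ?subr_gt0 //.
have -> : (expR de - expR (- de)) * expR de = expR de ^+ 2 - 1.
  by rewrite mulrBl [expR (- de) * _]mulrC eX expr2.
nra.
Qed.

Variables (I : finType) (P : pred I) (j0 : I) (Pj0 : P j0).

Lemma Zpos (s : I -> R) : 0 < \sum_(l | P l) expR (s l).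
Proof.
rewrite (bigD1 j0) //= ltr_wpDr // ?expR_gt0 //.
by apply: sumr_ge0 => l _; rewrite expR_ge0.
Qed.

Definition smx (s : I -> R) (j : I) := expR (s j) / \sum_(l | P l) expR (s l).

Lemma smx_sum (s : I -> R) : \sum_(j | P j) smx s j = 1.
Proof. by rewrite /smx -mulr_suml divff // lt0r_neq0 // Zpos. Qed.

Lemma smx_ge0 (s : I -> R) j : 0 <= smx s j.
Proof. by rewrite /smx divr_ge0 ?expR_ge0 // ltW // Zpos. Qed.

Lemma jensen_abs (pr w : I -> R) : (forall j, 0 <= pr j) -> \sum_(j | P j) pr j = 1 ->
  (\sum_(j | P j) pr j * `|w j|) ^+ 2 <= \sum_(j | P j) pr j * w j ^+ 2.
Proof.
move=> p0 p1; set S1 := \sum_(j | P j) pr j * `|w j|.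
have H : 0 <= \sum_(j | P j) pr j * (`|w j| - S1) ^+ 2.
  by apply: sumr_ge0 => j _; rewrite mulr_ge0 ?sqr_ge0.
have E : \sum_(j | P j) pr j * (`|w j| - S1) ^+ 2 =
    \sum_(j | P j) pr j * w j ^+ 2 - 2 * S1 * S1 + S1 ^+ 2 * \sum_(j | P j) pr j.
  rewrite (eq_bigr (fun j => pr j * w j ^+ 2 - (2 * S1) * (pr j * `|w j|) + S1 ^+ 2 * pr j)); last first.
    by move=> j _; rewrite -[w j ^+ 2]real_normK ?num_real //; ring.
  by rewrite !big_split /= sumrN -!mulr_sumr.
rewrite E p1 in H; lra.
Qed.

Lemma var_bound (pr rho : I -> R) (mm MM : R) :
  (forall j, 0 <= pr j) -> \sum_(j | P j) pr j = 1 -> \sum_(j | P j) pr j * rho j = 1 ->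
  (forall j, P j -> mm <= rho j <= MM) ->
  \sum_(j | P j) pr j * (rho j - 1) ^+ 2 <= ((MM - mm) / 2) ^+ 2.
Proof.
move=> p0 p1 pr1 hb.
apply: (@le_trans _ _ (\sum_(j | P j) pr j * ((MM + mm - 2) * rho j + (1 - MM * mm)))).
  apply: ler_sum => j Pj; apply: ler_wpM2l => //.
  have /andP[h1 h2] := hb j Pj; nra.
rewrite (eq_bigr (fun j => (MM + mm - 2) * (pr j * rho j) + (1 - MM * mm) * pr j)); last first.
  by move=> j _; ring.
rewrite big_split /= -!mulr_sumr pr1 p1.
have := sqr_ge0 ((MM + mm) / 2 - 1); nra.
Qed.

End L4.

Section L5.
Variable R : realType.
Variables (I : finType) (P : pred I) (j0 : I) (Pj0 : P j0).

Lemma softmax_diff (dd : nat) (s t : I -> R) (y : I -> 'rV[R]_dd) (Rr de : R) :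
  0 <= de -> 2 * de < 1 -> (forall j, P j -> `|t j - s j| <= de) ->
  (forall j, P j -> fnorm (y j) <= Rr) ->
  fnorm (\sum_(j | P j) (smx P s j - smx P t j) *: y j) <= Rr * (de / (1 - 2 * de)).
Proof.
move=> d0 d1 hd hy.
have Rr0 : 0 <= Rr by apply: le_trans (hy j0 Pj0); apply: fnorm_ge0.
set p := smx P s; set h := fun j => t j - s j.
set E := \sum_(j | P j) p j * expR (h j).
have p0 : forall j, 0 <= p j by move=> j; apply: (smx_ge0 Pj0).
have p1 : \sum_(j | P j) p j = 1 by apply: (smx_sum Pj0).
have hb : forall j, P j -> expR (- de) <= expR (h j) <= expR de.
  move=> j Pj; have := hd j Pj; rewrite ler_norml => /andP[a b].
  by rewrite !ler_expR a b.
have Eb : expR (- de) <= E.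
  apply: (@le_trans _ _ (\sum_(j | P j) p j * expR (- de))).
    by rewrite -mulr_suml p1 mul1r.
  apply: ler_sum => j Pj; apply: ler_wpM2l => //.
  by have /andP[] := hb j Pj.
have Ep : 0 < E by apply: lt_le_trans Eb; apply: expR_gt0.
have Zs := Zpos Pj0 s.
have qE : forall j, P j -> smx P t j = p j * (expR (h j) / E).
  move=> j Pj.
  have et : forall l, expR (t l) = expR (s l) * expR (h l).
    by move=> l; rewrite -expRD /h addrC subrK.
  have ZE : \sum_(l | P l) expR (t l) = (\sum_(l | P l) expR (s l)) * E.
    rewrite /E mulr_sumr; apply: eq_bigr => l _; rewrite et /p /smx.
    by field; rewrite lt0r_neq0.
  rewrite /smx ZE et /p /smx; field.
  by rewrite !lt0r_neq0.
set rho := fun j => expR (h j) / E.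
have rho1 : \sum_(j | P j) p j * rho j = 1.
  rewrite /rho (eq_bigr (fun j => (p j * expR (h j)) / E)); last by move=> j _; rewrite mulrA.
  by rewrite -mulr_suml divff // lt0r_neq0.
set mm := expR (- de) / E; set MM := expR de / E.
have rb : forall j, P j -> mm <= rho j <= MM.
  move=> j Pj; have /andP[a b] := hb j Pj.
  by rewrite /rho /mm /MM !ler_pM2r ?invr_gt0 // a b.
have S2b := var_bound p0 p1 rho1 rb.
have S1b := jensen_abs (fun j => rho j - 1) p0 p1.
set S1 := \sum_(j | P j) p j * `|rho j - 1|.
have S10 : 0 <= S1 by apply: sumr_ge0 => j _; rewrite mulr_ge0.
have mmMM : mm <= MM.
  by rewrite /mm /MM ler_pM2r ?invr_gt0 // ler_expR; lra.
have S1b' : S1 <= (MM - mm) / 2.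
  apply: sqr_le; first by rewrite divr_ge0 // subr_ge0.
  exact: le_trans S1b S2b.
have iE : E^-1 <= expR de.
  by rewrite -[expR de]invrK -expRN lef_pV2 ?posrE ?expR_gt0.
have Mb : (MM - mm) / 2 <= de / (1 - 2 * de).
  have := exp2_bound d0 d1.
  have : (MM - mm) = (expR de - expR (- de)) * E^-1 by rewrite /MM /mm mulrBl.
  have : 0 <= expR de - expR (- de) by rewrite subr_ge0 ler_expR; lra.
  move=> h0 ->.
  have : (expR de - expR (- de)) * E^-1 <= (expR de - expR (- de)) * expR de.
    by apply: ler_wpM2l.
  have : 2 * de / (1 - 2 * de) = 2 * (de / (1 - 2 * de)) by rewrite mulrA.
  move=> ->; lra.
have Sb : S1 <= de / (1 - 2 * de) by apply: le_trans Mb.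
have -> : \sum_(j | P j) (p j - smx P t j) *: y j =
          \sum_(j | P j) (- (p j * (rho j - 1))) *: y j.
  apply: eq_bigr => j Pj; rewrite qE //; congr (_ *: _); rewrite /rho; ring.
apply: le_trans (fnorm_sum _ _ _) _.
apply: (@le_trans _ _ (\sum_(j | P j) (p j * `|rho j - 1|) * Rr)).
  apply: ler_sum => j Pj; rewrite fnormZ normrN normrM ger0_norm //.
  by apply: ler_wpM2l; [rewrite mulr_ge0 | apply: hy].
by rewrite -mulr_suml mulrC; apply: ler_wpM2l.
Qed.

End L5.

Section L6.
Variable R : realType.
Variables (n d k : nat) (A : 'M[R]_d) (V : 'M[R]_(k, d)).

Lemma mdot_rv (u w : 'rV[R]_d) : (u *m w^T) 0 0 = mdot u w.
Proof. by rewrite /mdot big_ord1 mxE; apply: eq_bigr => l _; rewrite mxE. Qed.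

Lemma mdotBl (u u' w : 'rV[R]_d) : mdot (u - u') w = mdot u w - mdot u' w.
Proof.
rewrite /mdot -sumrB; apply: eq_bigr => i _; rewrite -sumrB; apply: eq_bigr => j _.
by rewrite !mxE mulrBl.
Qed.

Lemma mdotBr (u w w' : 'rV[R]_d) : mdot u (w - w') = mdot u w - mdot u w'.
Proof.
rewrite /mdot -sumrB; apply: eq_bigr => i _; rewrite -sumrB; apply: eq_bigr => j _.
by rewrite !mxE mulrBr.
Qed.

Lemma fnorm_mulAT (u : 'rV[R]_d) : fnorm (u *m A^T) <= spec_norm A * fnorm u.
Proof. by rewrite -fnorm_tr trmx_mul trmxK -(fnorm_tr u); apply: spec_le. Qed.

Lemma fnorm_mulVT (u : 'rV[R]_d) : fnorm (u *m V^T) <= spec_norm V * fnorm u.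
Proof. by rewrite -fnorm_tr trmx_mul trmxK -(fnorm_tr u); apply: spec_le. Qed.

Lemma scoreE (X : 'M[R]_(n, d)) i j : score A X i j = mdot (row i X *m A^T) (row j X).
Proof. by rewrite /score mdot_rv. Qed.

Lemma rowB' (X Y : 'M[R]_(n, d)) i : row i (X - Y) = row i X - row i Y.
Proof. by apply/rowP => j; rewrite !mxE. Qed.

Lemma score_diff (r : R) (X Y : 'M[R]_(n, d)) i j :
  inBallN r X -> inBallN r Y ->
  `|score A Y i j - score A X i j| <=
     spec_norm A * r * (fnorm (row i (X - Y)) + fnorm (row j (X - Y))).
Proof.
move=> hX hY.
have a0 := spec_ge0 A.
have E : score A Y i j - score A X i j =
   mdot ((row i Y - row i X) *m A^T) (row j Y) + mdot (row i X *m A^T) (row j Y - row j X).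
  rewrite !scoreE mulmxBl mdotBl mdotBr; ring.
rewrite E; apply: le_trans (ler_normD _ _) _.
have h1 : `|mdot ((row i Y - row i X) *m A^T) (row j Y)| <= spec_norm A * fnorm (row i (X - Y)) * r.
  apply: le_trans (mdot_abs _ _) _.
  apply: ler_pM; rewrite ?fnorm_ge0 //.
  by apply: le_trans (fnorm_mulAT _) _; rewrite rowB' fnormB.
have h2 : `|mdot (row i X *m A^T) (row j Y - row j X)| <= spec_norm A * r * fnorm (row j (X - Y)).
  apply: le_trans (mdot_abs _ _) _.
  apply: ler_pM; rewrite ?fnorm_ge0 //; last by rewrite rowB' fnormB.
  by apply: le_trans (fnorm_mulAT _) _; apply: ler_wpM2l.
lra.
Qed.

Definition gatt (X : 'M[R]_(n, d)) (i : 'I_n) : 'rV[R]_d :=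
  \sum_(j < n | (j <= i)%N) maskP A X i j *: row j X.

Lemma row_attn (X : 'M[R]_(n, d)) i : row i (masked_attn A V X) = gatt X i *m V^T.
Proof. by apply/rowP => j; rewrite /masked_attn !mxE; apply: eq_bigr => l _; rewrite !mxE. Qed.

Lemma maskP_smx (X : 'M[R]_(n, d)) i j : maskP A X i j = smx (fun l : 'I_n => (l <= i)%N) (score A X i) j.
Proof. by []. Qed.

End L6.

Section L7.
Variable R : realType.
Variables (n d k : nat) (A : 'M[R]_d) (V : 'M[R]_(k, d)).

Lemma row_bound (r : R) (X Y : 'M[R]_(n, d)) (i : 'I_n) :
  inBallN r X -> inBallN r Y ->
  2 * (spec_norm A * r * (fnorm (row i (X - Y)) + fnorm (X - Y))) < 1 ->
  fnorm (gatt A X i - gatt A Y i) <=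
    fnorm (X - Y) + r * ((spec_norm A * r * (fnorm (row i (X - Y)) + fnorm (X - Y))) /
                 (1 - 2 * (spec_norm A * r * (fnorm (row i (X - Y)) + fnorm (X - Y))))).
Proof.
move=> hX hY hde.
set D := fnorm (X - Y); set di := fnorm (row i (X - Y)).
set de := spec_norm A * r * (di + D).
pose P := fun l : 'I_n => (l <= i)%N.
have Pi : P i by rewrite /P leqnn.
have r0 : 0 <= r by apply: le_trans (hX i); apply: fnorm_ge0.
have a0 := spec_ge0 A.
have D0 : 0 <= D by apply: fnorm_ge0.
have di0 : 0 <= di by apply: fnorm_ge0.
have de0 : 0 <= de by rewrite /de !mulr_ge0 // addr_ge0.
have -> : gatt A X i - gatt A Y i =
   \sum_(j | P j) smx P (score A X i) j *: (row j X - row j Y) +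
   \sum_(j | P j) (smx P (score A X i) j - smx P (score A Y i) j) *: row j Y.
  rewrite /gatt -sumrB -big_split; apply: eq_bigr => j _.
  by rewrite /= scalerBr scalerBl addrA subrK.
apply: le_trans (fnormD _ _) _; apply: lerD.
  apply: le_trans (fnorm_sum _ _ _) _.
  apply: (@le_trans _ _ (\sum_(j | P j) smx P (score A X i) j * D)).
    apply: ler_sum => j _; rewrite fnormZ ger0_norm ?(smx_ge0 Pi) //.
    by apply: ler_wpM2l; [exact: (smx_ge0 Pi) | rewrite -rowB' fnorm_row_le].
  by rewrite -mulr_suml (smx_sum Pi) mul1r.
apply: (softmax_diff Pi) => //.
  move=> j Pj; apply: le_trans (score_diff A i j hX hY) _.
  rewrite /de ler_wpM2l ?mulr_ge0 // lerD2l; exact: fnorm_row_le.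
Qed.

End L7.

Section L8.
Variable R : realType.
Variables (n d k : nat) (A : 'M[R]_d) (V : 'M[R]_(k, d)).

Definition Bnd (r : R) := Num.sqrt 3 * spec_norm V *
    Num.sqrt (spec_norm A ^+ 2 * r ^+ 4 * (n%:R + 1) + n%:R).

Lemma Bnd_sq r : 0 <= r -> Bnd r ^+ 2 = 3 * spec_norm V ^+ 2 * (spec_norm A ^+ 2 * r ^+ 4 * (n%:R + 1) + n%:R).
Proof.
move=> r0; rewrite /Bnd !exprMn sqr_sqrtr ?ler0n // sqr_sqrtr //.
apply: addr_ge0; last exact: ler0n.
apply: mulr_ge0; last by apply: addr_ge0; [exact: ler0n | exact: ler01].
by apply: mulr_ge0; [exact: sqr_ge0 | exact: exprn_ge0].
Qed.

Lemma Bnd_ge0 r : 0 <= Bnd r.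
Proof. by rewrite /Bnd !mulr_ge0 ?sqrtr_ge0 ?spec_ge0. Qed.

Lemma sum_const_ord (c : R) : \sum_(i < n) c = n%:R * c.
Proof. by rewrite sumr_const card_ord mulr_natl. Qed.

Lemma quad_bd (x y z : R) : (x + y * (z + x)) ^+ 2 <= 3 * x ^+ 2 + 3 * y ^+ 2 * (z ^+ 2 + x ^+ 2).
Proof.
have h1 := sqr_ge0 (x - y * (z + x) / 2).
have h2 := sqr_ge0 (y * (z - x)).
nra.
Qed.

Lemma local_lip (r : R) (X Y : 'M[R]_(n, d)) : 0 <= r ->
  inBallN r X -> inBallN r Y ->
  4 * spec_norm A * r * fnorm (X - Y) < 1 ->
  fnorm (masked_attn A V X - masked_attn A V Y) <=
    Bnd r * fnorm (X - Y) / (1 - 4 * spec_norm A * r * fnorm (X - Y)).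
Proof.
move=> r0 hX hY hs.
set D := fnorm (X - Y); set a := spec_norm A; set v := spec_norm V.
set c := 4 * a * r * D.
have a0 : 0 <= a by apply: spec_ge0.
have v0 : 0 <= v by apply: spec_ge0.
have D0 : 0 <= D by apply: fnorm_ge0.
have c0 : 0 <= c by rewrite /c !mulr_ge0.
have cp : 0 < 1 - c by rewrite subr_gt0.
set g := (1 - c)^-1.
have g1 : 1 <= g by rewrite /g invf_ge1 // lerBlDr lerDl.
have g0 : 0 <= g by apply: le_trans g1; apply: ler01.
set y := g * (a * r ^+ 2).
have key : forall i, fnorm (row i (masked_attn A V X - masked_attn A V Y)) ^+ 2 <=
    v ^+ 2 * (3 * D ^+ 2 + 3 * y ^+ 2 * D ^+ 2) + (3 * v ^+ 2 * y ^+ 2) * fnorm (row i (X - Y)) ^+ 2.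
  move=> i.
  set di := fnorm (row i (X - Y)).
  have di0 : 0 <= di by apply: fnorm_ge0.
  have diD : di <= D by apply: fnorm_row_le.
  set de := a * r * (di + D).
  have de0 : 0 <= de by rewrite /de !mulr_ge0 // addr_ge0.
  have de2 : 2 * de <= c.
    rewrite /de /c; have : a * r * (di + D) <= a * r * (2 * D).
      by apply: ler_wpM2l; [rewrite mulr_ge0 | lra].
    lra.
  have hde : 2 * de < 1 by apply: le_lt_trans de2 _.
  have rb := row_bound hX hY hde.
  have dg : de / (1 - 2 * de) <= g * de.
    rewrite mulrC; apply: ler_wpM2r => //.
    rewrite /g lef_pV2 ?posrE ?subr_gt0 //; lra.
  have gb : fnorm (gatt A X i - gatt A Y i) <= D + y * (di + D).
    apply: le_trans rb _; rewrite -/di -/D -/de lerD2l.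
    have -> : y * (di + D) = r * (g * de) by rewrite /y /de; ring.
    by apply: ler_wpM2l.
  have rowE : row i (masked_attn A V X - masked_attn A V Y) = (gatt A X i - gatt A Y i) *m V^T.
    by rewrite rowB' !row_attn mulmxBl.
  rewrite rowE.
  have h1 : fnorm ((gatt A X i - gatt A Y i) *m V^T) <= v * (D + y * (di + D)).
    apply: le_trans (fnorm_mulVT _ _) _; apply: ler_wpM2l => //.
  have h2 : fnorm ((gatt A X i - gatt A Y i) *m V^T) ^+ 2 <= (v * (D + y * (di + D))) ^+ 2.
    have := fnorm_ge0 ((gatt A X i - gatt A Y i) *m V^T); nra.
  apply: le_trans h2 _.
  rewrite exprMn.
  have := quad_bd D y di.
  have v2 : 0 <= v ^+ 2 by apply: sqr_ge0.
  move=> q; have := ler_wpM2l v2 q; move=> q2.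
  apply: le_trans q2 _; rewrite le_eqVlt; apply/orP; left; apply/eqP; ring.
apply: sqr_le.
  by apply: mulr_ge0; [apply: mulr_ge0; [apply: Bnd_ge0 | done] | rewrite invr_ge0 ltW].
rewrite fnorm_sq ssm_rows.
apply: le_trans (ler_sum _ (fun i _ => key i)) _.
rewrite big_split /= sum_const_ord -mulr_sumr -ssm_rows -fnorm_sq -/D.
have -> : Bnd r * D / (1 - c) = g * D * Bnd r by rewrite /g; ring.
set K := (g ^+ 2 - 1).
have K0 : 0 <= K by rewrite /K subr_ge0; nra.
rewrite (exprMn 2 (g * D) (Bnd r)) Bnd_sq // -subr_ge0.
have -> : (g * D) ^+ 2 * (3 * v ^+ 2 * (a ^+ 2 * r ^+ 4 * (n%:R + 1) + n%:R)) -
  (n%:R * (v ^+ 2 * (3 * D ^+ 2 + 3 * y ^+ 2 * D ^+ 2)) +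
   3 * v ^+ 2 * y ^+ 2 * D ^+ 2) = (3 * v ^+ 2 * D ^+ 2 * n%:R) * K.
  by rewrite /K /y; ring.
by rewrite mulr_ge0 // !mulr_ge0 // ?sqr_ge0 // ler0n.
Qed.

End L8.

Section L9.
Variable R : realType.
Variables (n d k : nat) (A : 'M[R]_d) (V : 'M[R]_(k, d)).

Lemma ball_seg (r : R) (X Y : 'M[R]_(n, d)) (t : R) : 0 <= t <= 1 ->
  inBallN r X -> inBallN r Y -> inBallN r (X + t *: (Y - X)).
Proof.
move=> /andP[t0 t1] hX hY j.
have -> : row j (X + t *: (Y - X)) = (1 - t) *: row j X + t *: row j Y.
  by apply/rowP => l; rewrite !mxE; ring.
apply: le_trans (fnormD _ _) _; rewrite !fnormZ !ger0_norm ?subr_ge0 //.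
have := hX j; have := hY j; nra.
Qed.

Lemma seg_diff (X Y : 'M[R]_(n, d)) (a b : R) :
  (X + a *: (Y - X)) - (X + b *: (Y - X)) = (a - b) *: (Y - X).
Proof. by apply/matrixP => i j; rewrite !mxE; ring. Qed.

Lemma subdiv_bound (r : R) (X Y : 'M[R]_(n, d)) (N : nat) : 0 <= r ->
  inBallN r X -> inBallN r Y -> (0 < N)%N ->
  4 * spec_norm A * r * fnorm (X - Y) < N%:R ->
  fnorm (masked_attn A V X - masked_attn A V Y) <=
    Bnd n A V r * fnorm (X - Y) / (1 - 4 * spec_norm A * r * fnorm (X - Y) / N%:R).
Proof.
move=> r0 hX hY N0 hN.
have Np : 0 < N%:R :> R by rewrite ltr0n.
set D := fnorm (X - Y); set c := 4 * spec_norm A * r * D.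
pose Z (m : nat) := X + (m%:R / N%:R) *: (Y - X).
have Zb : forall m, (m <= N)%N -> inBallN r (Z m).
  move=> m hm; apply: ball_seg => //; apply/andP; split.
    by rewrite divr_ge0 // ler0n.
  by rewrite ler_pdivrMr // mul1r ler_nat.
have Z0 : Z 0%N = X by rewrite /Z mul0r scale0r addr0.
have ZN : Z N = Y by rewrite /Z divff ?lt0r_neq0 // scale1r addrC subrK.
have Zd : forall m, fnorm (Z m - Z m.+1) = D / N%:R.
  move=> m; rewrite /Z seg_diff fnormZ fnormB -/D.
  have -> : m%:R / N%:R - m.+1%:R / N%:R = - (N%:R)^-1 :> R.
    by rewrite -natr1; field; rewrite lt0r_neq0.
  by rewrite normrN ger0_norm ?invr_ge0 ?ltW // mulrC.
have cN : 4 * spec_norm A * r * (D / N%:R) < 1.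
  by rewrite mulrA ltr_pdivrMr // mul1r.
have step : forall m, (m < N)%N ->
   fnorm (masked_attn A V (Z m.+1) - masked_attn A V (Z m)) <=
   Bnd n A V r * (D / N%:R) / (1 - c / N%:R).
  move=> m hm; rewrite fnormB.
  have H := @local_lip R n d k A V r (Z m) (Z m.+1) r0 (Zb m (ltnW hm)) (Zb m.+1 hm).
  have e : 4 * spec_norm A * r * (D / N%:R) = c / N%:R by rewrite /c mulrA.
  rewrite !Zd e in H; apply: H; rewrite -e //.
have -> : masked_attn A V X - masked_attn A V Y =
   - \sum_(0 <= m < N) (masked_attn A V (Z m.+1) - masked_attn A V (Z m)).
  by rewrite telescope_sumr // ZN Z0 opprB.
rewrite fnormN; apply: le_trans (fnorm_sum _ _ _) _.
apply: le_trans (ler_sum_nat _) _.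
  by move=> m /andP[_ hm]; apply: step.
rewrite sumr_const_nat subn0 -[X in X <= _]mulr_natl.
have e : 4 * spec_norm A * r * (D / N%:R) = c / N%:R by rewrite /c mulrA.
have ne : 1 - c / N%:R != 0 by rewrite subr_eq0 eq_sym lt_eqF // -e.
rewrite le_eqVlt; apply/orP; left; apply/eqP; field.
by rewrite lt0r_neq0 // subr_eq0 gt_eqF.
Qed.

End L9.

Local Open Scope classical_set_scope.
Section L10.
Variable R : realType.
Variables (n d k : nat) (A : 'M[R]_d) (V : 'M[R]_(k, d)).

Lemma global_lip (r : R) (X Y : 'M[R]_(n, d)) : 0 <= r ->
  inBallN r X -> inBallN r Y ->
  fnorm (masked_attn A V X - masked_attn A V Y) <= Bnd n A V r * fnorm (X - Y).
Proof.
move=> r0 hX hY.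
set L := fnorm _; set D := fnorm (X - Y); set BD := Bnd n A V r * D.
set c := 4 * spec_norm A * r * D.
have D0 : 0 <= D by apply: fnorm_ge0.
have c0 : 0 <= c by rewrite /c !mulr_ge0 // spec_ge0.
have BD0 : 0 <= BD by rewrite /BD mulr_ge0 // Bnd_ge0.
rewrite leNgt; apply/negP => H.
have LB : 0 < L - BD by rewrite subr_gt0.
set K := 2 * c + 2 * BD * c / (L - BD).
have hBc : 0 <= 2 * BD * c by apply: mulr_ge0; [apply: mulr_ge0; [lra|done]|done].
have K1 : 2 * BD * c / (L - BD) <= K by rewrite /K lerDr; lra.
have K2 : 2 * c <= K by rewrite /K lerDl; apply: divr_ge0 => //; exact: ltW.
set N := (Num.truncn K).+1.
have NK : K < N%:R by apply: truncnS_gt.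
have Np : 0 < N%:R :> R by rewrite ltr0n.
have cN : c < N%:R by lra.
have hb := @subdiv_bound R n d k A V r X Y N r0 hX hY (ltn0Sn _) cN.
rewrite -/L -/D -/c -/BD in hb.
set x := c / N%:R.
have x0 : 0 <= x by rewrite /x divr_ge0 // ltW.
have x2 : 2 * x < 1 by rewrite /x mulrA ltr_pdivrMr // mul1r; lra.
have h1 : BD / (1 - x) <= BD * (1 + 2 * x).
  rewrite ler_pdivrMr ?subr_gt0; last by lra.
  have -> : BD * (1 + 2 * x) * (1 - x) = BD + BD * (x * (1 - 2 * x)) by ring.
  rewrite lerDl mulr_ge0 // mulr_ge0 // subr_ge0; lra.
have h2a : 2 * BD * c / (L - BD) < N%:R by apply: le_lt_trans K1 NK.
rewrite ltr_pdivrMr // in h2a.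
have h2 : 2 * BD * x < L - BD.
  rewrite /x mulrA ltr_pdivrMr //; nra.
have h3 : BD * (1 + 2 * x) = BD + 2 * BD * x by ring.
have := le_trans hb h1; rewrite h3; lra.
Qed.

End L10.

Theorem mainTheorem10 (R : realType) (k d n : nat) (Q K V : 'M[R]_(k, d)) (r : R) :
  0 < r ->
  lipschitz_on_ball (@masked_attn R k n d (attA Q K) V) r /\
  lip_const (@masked_attn R k n d (attA Q K) V) r <=
    Num.sqrt 3 * spec_norm V *
    Num.sqrt (spec_norm (attA Q K) ^+ 2 * r ^+ 4 * (n%:R + 1) + n%:R).
Proof.
move=> rp; have r0 := ltW rp.
have GL := fun X Y hX hY => @global_lip R n d k (attA Q K) V r X Y r0 hX hY.
split.
  by exists (Bnd n (attA Q K) V r) => X Y hX hY; apply: GL.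
change (lip_const (@masked_attn R k n d (attA Q K) V) r <= Bnd n (attA Q K) V r).
rewrite /lip_const.
case: (pselect (lip_quotients (@masked_attn R k n d (attA Q K) V) r !=set0)) => [ne|e].
  apply: ge_sup => // t [X [Y [hX hY XY ->]]].
  have Dp : 0 < fnorm (X - Y).
    rewrite lt0r fnorm_ge0 andbT; apply/eqP => h; apply: XY.
    by apply/eqP; rewrite -subr_eq0; apply/eqP; apply: fnorm_eq0.
  by rewrite ler_pdivrMr // GL.
have -> : lip_quotients (@masked_attn R k n d (attA Q K) V) r = set0.
  by apply/seteqP; split => x // Sx; exfalso; apply: e; exists x.
by rewrite sup0 Bnd_ge0.
Qed.
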